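(* For every positive integer $m$ there is a sentence $\varphi_m\in\mathrm{FO}^2_m[<]$ over the alphabet $\Sigma_m$ that separates $K_m$ and $L_m$.
   Context: Let $\Sigma_m=\{a_0,\dots,a_{m-1}\}$. For positive integers $i,n$ define words: $u_{1,n}=a_0$, $v_{1,n}=\varepsilon$ (empty word); $u_{2,n}=a_0(a_1a_0)^{2n}$, $v_{2,n}=(a_1a_0)^{2n}$; $u_{2i+1,n}=(a_0a_1\cdots a_{2i})^n\,u_{2i,n}$, $v_{2i+1,n}=(a_0a_1\cdots a_{2i})^n\,v_{2i,n}$; $u_{2i+2,n}=u_{2i+1,n}\,(a_{2i+1}a_{2i}\cdots a_0)^n$, $v_{2i+2,n}=v_{2i+1,n}\,(a_{2i+1}a_{2i}\cdots a_0)^n$. Let $K_m=\{u_{m,n}:n\ge1\}$ and $L_m=\{v_{m,n}:n\ge1\}$. Words are finite structures with universe $\{1,\dots,|w|\}$, unary predicates $Q_a$ marking positions carrying $a$, and the order $<$. $\mathrm{FO}^2_n[<]$ is first-order logic over this signature using only the variables $x,y$ with quantifier depth at most $n$; $\mathrm{FO}^2_{m,n}[<]$ is the set of its formulas in which every path in the parse tree has at most $m$ blocks of alternating quantifiers; $\mathrm{FO}^2_m[<]=\bigcup_{n\ge m}\mathrm{FO}^2_{m,n}[<]$. A formula $\varphi$ separates $K,L$ if every word of $K$ satisfies $\varphi$ and no word of $L$ does, or vice versa. *)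

(* Defs.v *)
From mathcomp Require Import all_boot.
Set Implicit Arguments. Unset Strict Implicit. Unset Printing Implicit Defensive.

(* Letters a_0,...,a_{m-1} of Sigma_m are represented by the naturals 0..m-1;
   a word is a seq nat (all of whose letters are < m for words over Sigma_m). *)

Fixpoint uw (k n : nat) : seq nat :=
  match k with
  | 0 => [::]
  | 1 => [:: 0]
  | 2 => 0 :: flatten (nseq (2 * n) [:: 1; 0])
  | k'.+1 => if odd k then flatten (nseq n (iota 0 k)) ++ uw k' n
             else uw k' n ++ flatten (nseq n (rev (iota 0 k)))
  end.

Fixpoint vw (k n : nat) : seq nat :=
  match k with
  | 0 => [::]
  | 1 => [::]
  | 2 => flatten (nseq (2 * n) [:: 1; 0])
  | k'.+1 => if odd k then flatten (nseq n (iota 0 k)) ++ vw k' n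
             else vw k' n ++ flatten (nseq n (rev (iota 0 k)))
  end.

Definition inK (m : nat) (w : seq nat) : Prop := exists2 n, 0 < n & w = uw m n.
Definition inL (m : nat) (w : seq nat) : Prop := exists2 n, 0 < n & w = vw m n.

(* ---- FO^2[<] : two variables x (= false) and y (= true) ----
   Formulas are in negation normal form (negation only on atoms), so that the
   quantifier alternation along a path of the parse tree is well defined. *)
Definition var := bool.
Definition vx : var := false.
Definition vy : var := true.

Inductive form : Type :=
| FTrue | FFalse
| FLetter (a : nat) (v : var)
| FNLetter (a : nat) (v : var)
| FLt (v1 v2 : var)
| FNLt (v1 v2 : var)
| FEq (v1 v2 : var)
| FNEq (v1 v2 : var)
| FAnd (f g : form) | FOr (f g : form)
| FEx (v : var) (f : form) | FAll (v : var) (f : form).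

Definition upd (e : var -> nat) (v : var) (i : nat) : var -> nat :=
  fun u => if u == v then i else e u.

(* positions are 1..|w|; the letter at position i is nth _ w (i-1) *)
Definition letter_at (w : seq nat) (i : nat) : nat := nth 0 w i.-1.

Fixpoint sat (w : seq nat) (e : var -> nat) (f : form) : Prop :=
  match f with
  | FTrue => True
  | FFalse => False
  | FLetter a v => letter_at w (e v) = a
  | FNLetter a v => letter_at w (e v) <> a
  | FLt v1 v2 => e v1 < e v2
  | FNLt v1 v2 => ~ (e v1 < e v2)
  | FEq v1 v2 => e v1 = e v2
  | FNEq v1 v2 => e v1 <> e v2
  | FAnd f g => sat w e f /\ sat w e g
  | FOr f g => sat w e f \/ sat w e g
  | FEx v f => exists i, 1 <= i <= size w /\ sat w (upd e v i) f
  | FAll v f => forall i, 1 <= i <= size w -> sat w (upd e v i) f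
  end.

(* free-variable check: [b v] says whether v is bound in the current context *)
Fixpoint closed_in (b : var -> bool) (f : form) : bool :=
  match f with
  | FTrue | FFalse => true
  | FLetter _ v | FNLetter _ v => b v
  | FLt v1 v2 | FNLt v1 v2 | FEq v1 v2 | FNEq v1 v2 => b v1 && b v2
  | FAnd f g | FOr f g => closed_in b f && closed_in b g
  | FEx v f | FAll v f => closed_in (fun u => (u == v) || b u) f
  end.

Definition sentence (f : form) : bool := closed_in (fun _ => false) f.

Fixpoint over_alph (m : nat) (f : form) : bool :=
  match f with
  | FLetter a _ | FNLetter a _ => a < m
  | FAnd f g | FOr f g => over_alph m f && over_alph m g
  | FEx _ f | FAll _ f => over_alph m f
  | _ => true
  end.

(* truth of a sentence in a word (the assignment is irrelevant for sentences) *)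
Definition models (w : seq nat) (f : form) : Prop := sat w (fun _ => 0) f.

Fixpoint qdepth (f : form) : nat :=
  match f with
  | FAnd f g | FOr f g => maxn (qdepth f) (qdepth g)
  | FEx _ f | FAll _ f => (qdepth f).+1
  | _ => 0
  end.

(* maximal number of blocks of alternating quantifiers along a path of the
   parse tree; [cur] is the kind of the last quantifier seen on the path
   (Some true = exists, Some false = forall, None = none yet). *)
Fixpoint blocks_from (cur : option bool) (f : form) : nat :=
  match f with
  | FAnd f g | FOr f g => maxn (blocks_from cur f) (blocks_from cur g)
  | FEx _ f => (if cur == Some true then 0 else 1) + blocks_from (Some true) f
  | FAll _ f => (if cur == Some false then 0 else 1) + blocks_from (Some false) f
  | _ => 0
  end.

Definition blocks (f : form) : nat := blocks_from None f.

Definition in_FO2mn (m n : nat) (f : form) : bool := (qdepth f <= n) && (blocks f <= m).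
Definition in_FO2m (m : nat) (f : form) : Prop := exists2 n, m <= n & in_FO2mn m n f.

Definition separates (f : form) (K L : seq nat -> Prop) : Prop :=
  ((forall w, K w -> models w f) /\ (forall w, L w -> ~ models w f)) \/
  ((forall w, L w -> models w f) /\ (forall w, K w -> ~ models w f)).

(* Main.v *)
Require Import Defs.
From mathcomp Require Import all_boot zify.
Set Implicit Arguments. Unset Strict Implicit.

Definition gS c (v : var) := FAll (~~v) (FOr (FLt (~~v) v) (FNLetter c (~~v))).
Definition nS c (v : var) := FEx (~~v) (FAnd (FNLt (~~v) v) (FLetter c (~~v))).
Definition gP c (v : var) := FAll (~~v) (FOr (FLt v (~~v)) (FNLetter c (~~v))).
Definition nP c (v : var) := FEx (~~v) (FAnd (FNLt v (~~v)) (FLetter c (~~v))).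

Fixpoint rel (G N : var -> form) (f : form) : form :=
  match f with
  | FAnd f g => FAnd (rel G N f) (rel G N g)
  | FOr f g => FOr (rel G N f) (rel G N g)
  | FEx v g => FEx v (FAnd (G v) (rel G N g))
  | FAll v g => FAll v (FOr (N v) (rel G N g))
  | a => a
  end.

Lemma upd_same e v i : upd e v i v = i.
Proof. by rewrite /upd eqxx. Qed.
Lemma upd_other e v i u : u != v -> upd e v i u = e u.
Proof. by rewrite /upd => /negbTE ->. Qed.
Lemma upd_neg e v i : upd e (~~v) i v = e v.
Proof. by apply: upd_other; case: v. Qed.

Lemma rel_sat G N w t k : k + size t <= size w ->
 (forall j, 1 <= j <= size t -> letter_at w (j + k) = letter_at t j) ->
 (forall e v, 1 <= e v <= size w -> (sat w e (G v) <-> k < e v <= k + size t)) ->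
 (forall e v, 1 <= e v <= size w -> (sat w e (N v) <-> ~ (k < e v <= k + size t))) ->
 forall f b e e', closed_in b f -> (forall u, b u -> e u = e' u + k /\ 1 <= e' u <= size t) ->
 (sat w e (rel G N f) <-> sat t e' f).
Proof.
move=> Hs Hl HG HN f; elim: f => //=.
- move=> a v b e e' Hb He; have [-> H2] := He v Hb; by rewrite Hl.
- move=> a v b e e' Hb He; have [-> H2] := He v Hb; by rewrite Hl.
- move=> v1 v2 b e e' /andP[H1 H2] He.
  have [-> _] := He v1 H1; have [-> _] := He v2 H2; by rewrite ltn_add2r.
- move=> v1 v2 b e e' /andP[H1 H2] He.
  have [-> _] := He v1 H1; have [-> _] := He v2 H2; by rewrite ltn_add2r.
- move=> v1 v2 b e e' /andP[H1 H2] He.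
  have [-> _] := He v1 H1; have [-> _] := He v2 H2; split; [by move/addIn|by move->].
- move=> v1 v2 b e e' /andP[H1 H2] He.
  have [-> _] := He v1 H1; have [-> _] := He v2 H2; split=> H E; apply: H; [by rewrite E|exact: (addIn E)].
- move=> f IHf g IHg b e e' /andP[H1 H2] He.
  by rewrite (IHf b e e' H1 He) (IHg b e e' H2 He).
- move=> f IHf g IHg b e e' /andP[H1 H2] He.
  by rewrite (IHf b e e' H1 He) (IHg b e e' H2 He).
- move=> v g IH b e e' Hc He; split.
  + move=> [i [Hi [HGi Hr]]].
    have Hi' : 1 <= upd e v i v <= size w by rewrite upd_same.
    move: (proj1 (HG _ _ Hi') HGi); rewrite upd_same => Hk.
    exists (i - k); split; first by lia.
    apply: (proj1 (IH _ (upd e v i) (upd e' v (i - k)) Hc _) Hr) => u; rewrite /upd.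
    case: (u == v) => /= [_|/He //]; lia.
  + move=> [j [Hj Hr]]; exists (j + k); split; first by lia.
    have Hi' : 1 <= upd e v (j + k) v <= size w by rewrite upd_same; lia.
    split; first by apply/(HG _ _ Hi'); rewrite upd_same; lia.
    apply: (proj2 (IH _ (upd e v (j + k)) (upd e' v j) Hc _) Hr) => u; rewrite /upd.
    case: (u == v) => /= [_|/He //]; lia.
- move=> v g IH b e e' Hc He; split.
  + move=> H j Hj; have Hi : 1 <= j + k <= size w by lia.
    case: (H _ Hi) => [HNi|Hr].
      have Hi' : 1 <= upd e v (j + k) v <= size w by rewrite upd_same.
      by move: (proj1 (HN _ _ Hi') HNi); rewrite upd_same; lia.
    apply: (proj1 (IH _ (upd e v (j + k)) (upd e' v j) Hc _) Hr) => u; rewrite /upd.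
    case: (u == v) => /= [_|/He //]; lia.
  + move=> H i Hi.
    have Hi' : 1 <= upd e v i v <= size w by rewrite upd_same.
    case Hin: (k < i <= k + size t).
      right; have Hj : 1 <= i - k <= size t by lia.
      apply: (proj2 (IH _ (upd e v i) (upd e' v (i - k)) Hc _) (H _ Hj)).
      move=> u; rewrite /upd; case: (u == v) => /= [_|/He //]; lia.
    by left; apply/(HN _ _ Hi'); rewrite upd_same Hin.
Qed.

Lemma letS_c (q : seq nat) (c : nat) (t : seq nat): letter_at (q ++ c :: t) (size q + 1) = c.
Proof. by rewrite /letter_at addn1 /= nth_cat ltnn subnn. Qed.
Lemma letS_t (q : seq nat) (c : nat) (t : seq nat) (j : nat): 1 <= j -> letter_at (q ++ c :: t) (j + (size q + 1)) = letter_at t j.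
Proof.
move=> Hj; rewrite /letter_at nth_cat ifF; last by apply/negbTE; rewrite -leqNgt; lia.
have -> : (j + (size q + 1)).-1 - size q = j by lia.
by case: j Hj.
Qed.
Lemma letS_nc (q : seq nat) (c : nat) (t : seq nat) (i : nat): c \notin t -> size q + 1 < i <= size (q ++ c :: t) ->
  letter_at (q ++ c :: t) i <> c.
Proof.
move=> Hc Hi; have -> : i = (i - (size q + 1)) + (size q + 1) by lia.
rewrite letS_t; last by lia.
move=> E; move/negP: Hc; apply; rewrite -E /letter_at; apply: mem_nth.
rewrite size_cat /= in Hi; case/andP: Hi => H1 H2; rewrite -subn1; clear E; set a := size q in H1 H2 *; set b := size t in H2 *; clearbody a b; lia.
Qed.

Lemma gS_sat (c : nat) (q : seq nat) (t : seq nat) (e : var -> nat) (v : var): c \notin t -> 1 <= e v <= size (q ++ c :: t) ->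
  (sat (q ++ c :: t) e (gS c v) <-> size q + 1 < e v <= size q + 1 + size t).
Proof.
move=> Hc Hv; have Hsz := size_cat q (c :: t); rewrite /= in Hsz.
split.
- move=> H; have Hk : 1 <= size q + 1 <= size (q ++ c :: t) by lia.
  move: (H _ Hk); rewrite upd_same upd_neg letS_c; case=> // Hlt; lia.
- move=> Hin i Hi; rewrite upd_same upd_neg.
  case Hlt: (i < e v); [by left|right].
  apply: letS_nc => //; lia.
Qed.

Lemma nS_sat (c : nat) (q : seq nat) (t : seq nat) (e : var -> nat) (v : var): c \notin t -> 1 <= e v <= size (q ++ c :: t) ->
  (sat (q ++ c :: t) e (nS c v) <-> ~ (size q + 1 < e v <= size q + 1 + size t)).
Proof.
move=> Hc Hv; have Hsz := size_cat q (c :: t); rewrite /= in Hsz.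
split.
- move=> [i [Hi []]]; rewrite /= upd_same upd_neg => H1 H2.
  case Hi2: (size q + 1 < i); last by lia.
  exfalso; move: H2; apply: letS_nc => //; lia.
- move=> Hn; exists (size q + 1); split; first by lia.
  by rewrite /= upd_same upd_neg letS_c; split => //; lia.
Qed.

Lemma letP_t (t : seq nat) (c : nat) (r : seq nat) (j : nat): 1 <= j <= size t -> letter_at (t ++ c :: r) (j + 0) = letter_at t j.
Proof. move=> Hj; rewrite addn0 /letter_at nth_cat ifT //; lia. Qed.
Lemma letP_c (t : seq nat) (c : nat) (r : seq nat): letter_at (t ++ c :: r) (size t + 1) = c.
Proof. by rewrite /letter_at addn1 /= nth_cat ltnn subnn. Qed.
Lemma letP_nc (t : seq nat) (c : nat) (r : seq nat) (i : nat): c \notin t -> 1 <= i <= size t -> letter_at (t ++ c :: r) i <> c.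
Proof.
move=> Hc Hi; rewrite -(addn0 i) letP_t // => E; move/negP: Hc; apply.
rewrite -E /letter_at; apply: mem_nth; case/andP: Hi => H1 H2; rewrite -subn1; clear E; set b := size t in H2 *; clearbody b; lia.
Qed.

Lemma gP_sat (c : nat) (t : seq nat) (r : seq nat) (e : var -> nat) (v : var): c \notin t -> 1 <= e v <= size (t ++ c :: r) ->
  (sat (t ++ c :: r) e (gP c v) <-> 0 < e v <= 0 + size t).
Proof.
move=> Hc Hv; have Hsz := size_cat t (c :: r); rewrite /= in Hsz.
split.
- move=> H; have Hk : 1 <= size t + 1 <= size (t ++ c :: r) by lia.
  move: (H _ Hk); rewrite upd_same upd_neg letP_c; case=> // Hlt; lia.
- move=> Hin i Hi; rewrite upd_same upd_neg.
  case Hlt: (e v < i); [by left|right].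
  apply: letP_nc => //; lia.
Qed.

Lemma nP_sat (c : nat) (t : seq nat) (r : seq nat) (e : var -> nat) (v : var): c \notin t -> 1 <= e v <= size (t ++ c :: r) ->
  (sat (t ++ c :: r) e (nP c v) <-> ~ (0 < e v <= 0 + size t)).
Proof.
move=> Hc Hv; have Hsz := size_cat t (c :: r); rewrite /= in Hsz.
split.
- move=> [i [Hi []]]; rewrite /= upd_same upd_neg => H1 H2.
  case Hi2: (i <= size t); last by lia.
  exfalso; move: H2; apply: letP_nc => //; lia.
- move=> Hn; exists (size t + 1); split; first by lia.
  by rewrite /= upd_same upd_neg letP_c; split => //; lia.
Qed.

Lemma relS_models (c : nat) (q : seq nat) (t : seq nat) (f : form): c \notin t -> sentence f ->
  (models (q ++ c :: t) (rel (gS c) (nS c) f) <-> models t f).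
Proof.
move=> Hc Hf; have Hsz := size_cat q (c :: t); rewrite /= in Hsz.
apply: (@rel_sat _ _ _ t (size q + 1) _ _ _ _ f _ _ _ Hf) => //.
- lia.
- move=> j /andP[Hj _]; exact: letS_t.
- move=> e v Hv; exact: gS_sat.
- move=> e v Hv; exact: nS_sat.
Qed.

Lemma relP_models (c : nat) (t : seq nat) (r : seq nat) (f : form): c \notin t -> sentence f ->
  (models (t ++ c :: r) (rel (gP c) (nP c) f) <-> models t f).
Proof.
move=> Hc Hf; have Hsz := size_cat t (c :: r); rewrite /= in Hsz.
apply: (@rel_sat _ _ _ t 0 _ _ _ _ f _ _ _ Hf) => //.
- lia.
- move=> j Hj; exact: letP_t.
- move=> e v Hv; exact: gP_sat.
- move=> e v Hv; exact: nP_sat.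
Qed.

Lemma rel_blocks (G N : var -> form) f cur :
  (forall v, blocks_from (Some true) (G v) <= 1) ->
  (forall v, blocks_from (Some false) (N v) <= 1) ->
  blocks_from cur (rel G N f) <= (blocks_from cur f).+1.
Proof.
move=> HG HN; elim: f cur => //=.
- move=> f IHf g IHg cur; have := IHf cur; have := IHg cur; lia.
- move=> f IHf g IHg cur; have := IHf cur; have := IHg cur; lia.
- move=> v g IH cur; have := IH (Some true); have := HG v.
  case: (cur == Some true) => /=; lia.
- move=> v g IH cur; have := IH (Some false); have := HN v.
  case: (cur == Some false) => /=; lia.
Qed.

Lemma rel_closed (G N : var -> form) f (b : var -> bool) :
  (forall (b : var -> bool) v, b v -> closed_in b (G v)) ->
  (forall (b : var -> bool) v, b v -> closed_in b (N v)) ->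
  closed_in b f -> closed_in b (rel G N f).
Proof.
move=> HG HN; elim: f b => //=.
- by move=> f IHf g IHg b /andP[/IHf -> /IHg ->].
- by move=> f IHf g IHg b /andP[/IHf -> /IHg ->].
- by move=> v g IH b /IH ->; rewrite HG //= eqxx.
- by move=> v g IH b /IH ->; rewrite HN //= eqxx.
Qed.

Lemma rel_alph (G N : var -> form) f m :
  (forall v, over_alph m (G v)) -> (forall v, over_alph m (N v)) ->
  over_alph m f -> over_alph m (rel G N f).
Proof.
move=> HG HN; elim: f => //=.
- by move=> f IHf g IHg /andP[/IHf -> /IHg ->].
- by move=> f IHf g IHg /andP[/IHf -> /IHg ->].
- by move=> v g IH /IH ->; rewrite HG.
- by move=> v g IH /IH ->; rewrite HN.
Qed.

Lemma alph_mono m m' f : m <= m' -> over_alph m f -> over_alph m' f.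
Proof.
move=> Hm; elim: f => //=.
- by move=> a v H; apply: leq_trans Hm.
- by move=> a v H; apply: leq_trans Hm.
- by move=> f IHf g IHg /andP[/IHf -> /IHg ->].
- by move=> f IHf g IHg /andP[/IHf -> /IHg ->].
Qed.

Lemma guards_closed c : [/\ forall (b : var -> bool) v, b v -> closed_in b (gS c v),
  forall (b : var -> bool) v, b v -> closed_in b (nS c v), forall (b : var -> bool) v, b v -> closed_in b (gP c v) &
  forall (b : var -> bool) v, b v -> closed_in b (nP c v)].
Proof. by split=> b [] /= ->; rewrite ?orbT. Qed.

Fixpoint phi (m : nat) : form :=
  match m with
  | 0 => FTrue
  | 1 => FEx vx (FLetter 0 vx)
  | 2 => FEx vx (FAnd (FLetter 0 vx) (FAll vy (FNLt vy vx)))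
  | S ((S (S k)) as m') =>
      if odd m'.+1 then rel (gS m') (nS m') (phi m') else rel (gP m') (nP m') (phi m')
  end.

Lemma phiS k : phi k.+3 = if odd k.+3 then rel (gS k.+2) (nS k.+2) (phi k.+2)
                         else rel (gP k.+2) (nP k.+2) (phi k.+2).
Proof. by []. Qed.
Lemma uwS k n : uw k.+3 n = if odd k.+3 then flatten (nseq n (iota 0 k.+3)) ++ uw k.+2 n
  else uw k.+2 n ++ flatten (nseq n (rev (iota 0 k.+3))).
Proof. by []. Qed.
Lemma vwS k n : vw k.+3 n = if odd k.+3 then flatten (nseq n (iota 0 k.+3)) ++ vw k.+2 n
  else vw k.+2 n ++ flatten (nseq n (rev (iota 0 k.+3))).
Proof. by []. Qed.

Lemma flat_rcons (x : seq nat) n : flatten (nseq n.+1 x) = flatten (nseq n x) ++ x.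
Proof.
elim: n => [|n IH]; first by rewrite /= cats0.
by rewrite /= in IH *; rewrite -catA -IH.
Qed.

Lemma flat_iota n k : 0 < n -> exists q, flatten (nseq n (iota 0 k.+1)) = q ++ [:: k].
Proof.
case: n => // n _; rewrite flat_rcons -addn1 iotaD /= catA.
by eexists.
Qed.

Lemma flat_rev n k : 0 < n -> exists r, flatten (nseq n (rev (iota 0 k.+1))) = k :: r.
Proof.
have -> : iota 0 k.+1 = iota 0 k ++ [:: k] by rewrite -addn1 iotaD.
case: n => // n _; rewrite /= rev_cat /=.
by eexists.
Qed.

Lemma all_flat (P : pred nat) x n : all P x -> all P (flatten (nseq n x)).
Proof. by move=> H; elim: n => //= n IH; rewrite all_cat H IH. Qed.

Lemma letters_lt k n : 0 < k ->
  all (fun x => x < k) (uw k n) /\ all (fun x => x < k) (vw k n).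
Proof.
case: k => // k _; elim: k => [|[|k] IH]; first by [].
- by split => //=; apply: all_flat.
- rewrite uwS vwS.
  have Hi : all (fun x => x < k.+3) (iota 0 k.+3) by apply/allP => x; rewrite mem_iota.
  have Hr : all (fun x => x < k.+3) (rev (iota 0 k.+3)) by rewrite all_rev.
  case: IH => H1 H2.
  have W : forall s, all (fun x => x < k.+2) s -> all (fun x => x < k.+3) s.
    by move=> s; apply: sub_all => x /ltnW.
  by split; case: (odd _); rewrite all_cat; apply/andP; split;
    first [exact: all_flat | exact: W].
Qed.

Lemma notin_lt k n : 0 < k -> k \notin uw k n /\ k \notin vw k n.
Proof.
move=> Hk; have [H1 H2] := letters_lt n Hk.
by split; apply/negP => /(allP) => H; [move: (H _ H1)|move: (H _ H2)]; rewrite ltnn.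
Qed.

Lemma vw2S n : exists r, vw 2 n.+1 = 1 :: r.
Proof. rewrite /=; by eexists. Qed.

Lemma phi_main k : [/\ sentence (phi k.+1), over_alph k.+1 (phi k.+1),
  blocks (phi k.+1) <= k.+1 &
  forall n, 0 < n -> models (uw k.+1 n) (phi k.+1) /\ ~ models (vw k.+1 n) (phi k.+1)].
Proof.
elim: k => [|[|k] IH].
- split => // n Hn; split; first by exists 1.
  by move=> [i [Hi _]]; move: Hi; rewrite /=; lia.
- split => // n Hn; split.
    exists 1; split; first by rewrite /=; lia.
    split; first by [].
    move=> j Hj; rewrite /upd /=; lia.
  case: n Hn => // n _; have [r ->] := vw2S n.
  move=> [i [Hi [HL HA]]].
  have H1 : 0 < 1 <= size (1 :: r) by [].
  move: (HA 1 H1); rewrite /upd /= => Hn1.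
  have Ei : i = 1 by move: Hi; rewrite /=; lia.
  by move: HL; rewrite /upd /= Ei.
- case: IH => Hs Ha Hb Hw.
  have Gc := guards_closed k.+2.
  case: Gc => G1 G2 G3 G4.
  rewrite phiS.
  have Ha' : over_alph k.+3 (phi k.+2) by apply: alph_mono Ha.
  case Ho: (odd k.+3).
  + split.
    * by apply: rel_closed.
    * by apply: rel_alph => //; case => /=; rewrite ?ltnSn ?andbT.
    * have HB : blocks (rel (gS k.+2) (nS k.+2) (phi k.+2)) <= (blocks (phi k.+2)).+1.
        by apply: rel_blocks => -[].
      exact: (leq_trans HB).
    * move=> n Hn; have [q Hq] := flat_iota k.+2 Hn.
      have [N1 N2] := notin_lt n (isT : 0 < k.+2).
      rewrite uwS vwS Ho Hq -!catA ![[:: _] ++ _]/=.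
      rewrite !relS_models //; exact: Hw.
  + split.
    * by apply: rel_closed.
    * by apply: rel_alph => //; case => /=; rewrite ?ltnSn ?andbT.
    * have HB : blocks (rel (gP k.+2) (nP k.+2) (phi k.+2)) <= (blocks (phi k.+2)).+1.
        by apply: rel_blocks => -[].
      exact: (leq_trans HB).
    * move=> n Hn; have [r Hr] := flat_rev k.+2 Hn.
      have [N1 N2] := notin_lt n (isT : 0 < k.+2).
      rewrite uwS vwS Ho Hr.
      rewrite !relP_models //; exact: Hw.
Qed.

Theorem lemma4p9 (m : nat) (hm : 0 < m) :
  exists phi : form,
    [/\ sentence phi, over_alph m phi, in_FO2m m phi & separates phi (inK m) (inL m)].
Proof.
case: m hm => // k _; have [Hs Ha Hb Hw] := phi_main k.
exists (phi k.+1); split => //.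
- exists (maxn k.+1 (qdepth (phi k.+1))); first exact: leq_maxl.
  by rewrite /in_FO2mn leq_maxr Hb.
- left; split.
  + by move=> w [n Hn ->]; case: (Hw n Hn).
  + by move=> w [n Hn ->]; case: (Hw n Hn).
Qed.
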